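(* Let $G$ be a connected graph. If every optimal vector coloring of $G$ is locally injective, then $G$ is a core; likewise, if every optimal strict vector coloring of $G$ is locally injective, then $G$ is a core. In particular, if $G$ is uniquely vector colorable and its unique optimal vector coloring is locally injective, then $G$ is a core.
   Context: A vector $t$-coloring of $G$ ($t\ge2$) assigns unit vectors $p_i\in\mathbb{R}^d$ to vertices with $\langle p_i,p_j\rangle\le-1/(t-1)$ for all edges $ij$; it is strict if equality holds on all edges. $\chi_v(G)$ (resp. $\chi_{sv}(G)$) is the least $t\ge2$ admitting a (resp. strict) vector $t$-coloring; an optimal (strict) vector coloring is a (strict) vector $\chi_v(G)$- (resp. $\chi_{sv}(G)$-) coloring. $G$ is uniquely vector colorable if any two optimal vector colorings have the same Gram matrix. A vector coloring is locally injective if no two distinct vertices having a common neighbor are assigned the same vector. A graph homomorphism $G\to H$ is an adjacency-preserving map $V(G)\to V(H)$; $G$ is a core if every homomorphism $G\to G$ is an automorphism (equivalently, $G$ has no homomorphism to a proper subgraph). *)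

(* Defs.v *)
From HB Require Import structures.
From mathcomp Require Import all_boot all_order all_algebra.
From mathcomp Require Import reals.
Set Implicit Arguments. Unset Strict Implicit. Unset Printing Implicit Defensive.
Import Order.TTheory GRing.Theory Num.Theory.
Local Open Scope ring_scope.

(* A graph is given by a finite vertex type T and an adjacency relation e
   (assumed symmetric and irreflexive in the theorem). *)

Section VC.
Variable R : realType.
Variable T : finType.
Variable e : rel T.

Definition dotv (d : nat) (u v : 'rV[R]_d) : R := (u *m v^T) 0 0.

Definition vector_coloring (t : R) (d : nat) (p : T -> 'rV[R]_d) : Prop :=
  2 <= t /\ (forall i, dotv (p i) (p i) = 1) /\
  (forall i j, e i j -> dotv (p i) (p j) <= - (t - 1)^-1).

Definition strict_vector_coloring (t : R) (d : nat) (p : T -> 'rV[R]_d) : Prop :=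
  2 <= t /\ (forall i, dotv (p i) (p i) = 1) /\
  (forall i j, e i j -> dotv (p i) (p j) = - (t - 1)^-1).

Definition admits_vc (t : R) : Prop := exists d (p : T -> 'rV[R]_d), vector_coloring t p.
Definition admits_svc (t : R) : Prop := exists d (p : T -> 'rV[R]_d), strict_vector_coloring t p.

Definition optimal_vc (d : nat) (p : T -> 'rV[R]_d) : Prop :=
  exists t, vector_coloring t p /\ forall t', admits_vc t' -> t <= t'.

Definition optimal_svc (d : nat) (p : T -> 'rV[R]_d) : Prop :=
  exists t, strict_vector_coloring t p /\ forall t', admits_svc t' -> t <= t'.

Definition uniquely_vc : Prop :=
  forall d1 (p1 : T -> 'rV[R]_d1) d2 (p2 : T -> 'rV[R]_d2),
    optimal_vc p1 -> optimal_vc p2 ->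
    forall i j, dotv (p1 i) (p1 j) = dotv (p2 i) (p2 j).

Definition locally_injective (d : nat) (p : T -> 'rV[R]_d) : Prop :=
  forall i j k, e i k -> e j k -> i != j -> p i != p j.

End VC.

Section Core.
Variable T : finType.
Variable e : rel T.

Definition graph_hom (f : T -> T) : Prop := forall x y, e x y -> e (f x) (f y).

Definition graph_aut (f : T -> T) : Prop :=
  bijective f /\ forall x y, e x y = e (f x) (f y).

Definition is_core : Prop := forall f, graph_hom f -> graph_aut f.

Definition connected_graph : Prop := forall x y, connect e x y.
End Core.

(* Main.v *)
Require Import Defs.
From HB Require Import structures.
From mathcomp Require Import all_boot all_order all_algebra.
From mathcomp Require Import reals.
From mathcomp Require Import all_classical all_reals all_analysis.
From mathcomp Require Import zify ring lra.
Set Implicit Arguments. Unset Strict Implicit. Unset Printing Implicit Defensive.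
Import Order.TTheory GRing.Theory Num.Theory.
Import numFieldNormedType.Exports.
Section Comb.
Variables (T : finType) (e : rel T).
Hypothesis e_sym : symmetric e.
Hypothesis e_conn : connected_graph e.

Definition loc_inj (f : T -> T) :=
  forall i j k, e i k -> e j k -> i != j -> f i != f j.

Lemma iter_hom n f : graph_hom e f -> graph_hom e (iter n f).
Proof. by move=> hf; elim: n => //= n IH x y exy; apply: hf; apply: IH. Qed.

Lemma iter_li n f : graph_hom e f -> loc_inj f -> loc_inj (iter n f).
Proof.
move=> hf lf; elim: n => [|n IH] i j k eik ejk nij /=; first by [].
by apply: (lf _ _ (iter n f k)); [exact: iter_hom hf _ _ eik|exact: iter_hom hf _ _ ejk|apply: IH eik ejk nij].
Qed.

Lemma retract_id r : graph_hom e r -> loc_inj r -> (forall x, r (r x) = r x) ->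
  forall x, r x = x.
Proof.
move=> hr lr idr x.
have S v w : r v = v -> e v w -> r w = w.
  move=> rv evw; apply/eqP; apply/negPn/negP => nw.
  have e1 : e w v by rewrite e_sym.
  have e2 : e (r w) v by have := hr _ _ evw; rewrite rv e_sym.
  by have := lr _ _ _ e1 e2; rewrite eq_sym idr eqxx; move/(_ nw).
have cl : fingraph.closed e [pred y | r y == y].
  move=> u v euv /=; apply/eqP/eqP => H; first exact: S euv.
  by apply: S H _; rewrite e_sym.
have := closed_connect cl (e_conn (r x) x); rewrite !inE idr eqxx.
by move/esym/eqP.
Qed.

Lemma comb_main f : graph_hom e f -> loc_inj f -> graph_aut e f.
Proof.
move=> hf lf.
pose F (k : 'I_(#|{ffun T -> T}|.+1)) : {ffun T -> T} := [ffun x => iter k f x].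
have : ~~ injectiveb F.
  apply/negP => /injectiveP injF; have := leq_card _ injF.
  by rewrite card_ord ltnn.
case/injectivePn => a [b nab Fab].
have [a0 [b0 [ltab eqab]]] : exists a0 b0 : nat, (a0 < b0)%N /\ forall x, iter a0 f x = iter b0 f x.
  have eq1 x : iter a f x = iter b f x by have := congr1 (fun g : {ffun T -> T} => g x) Fab; rewrite !ffunE.
  case: (ltngtP a b) => [lt|lt|/val_inj E]; last by rewrite E eqxx in nab.
  - by exists a, b.
  - by exists b, a; split=> // x; rewrite eq1.
pose p := (b0 - a0)%N.
have claim n x : (a0 <= n)%N -> iter (n + p) f x = iter n f x.
  move=> le; rewrite (_ : (n + p = (n - a0) + b0)%N); last by rewrite /p; lia.
  by rewrite iterD -eqab -iterD subnK.
have claim2 j n x : (a0 <= n)%N -> iter (n + j * p) f x = iter n f x.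
  move=> le; elim: j => [|j IH]; first by rewrite mul0n addn0.
  by rewrite mulSnr addnA claim ?IH //; apply: leq_trans le (leq_addr _ _).
pose E := (a0.+1 * p)%N.
have Ege : (a0 <= E)%N by rewrite /E /p; nia.
have Egt : (0 < E)%N by rewrite /E /p; nia.
have rid : forall x, iter E f x = x.
  apply: retract_id; [exact: iter_hom|exact: iter_li|].
  by move=> x; rewrite -iterD claim2.
case: E rid Egt {Ege} => // E' rid _.
have gf x : iter E' f (f x) = x by rewrite -iterSr rid.
have fg x : f (iter E' f x) = x by rewrite -iterS rid.
split; first by exists (iter E' f).
move=> x y; apply/idP/idP; first exact: hf.
by move=> /(iter_hom E' hf); rewrite !gf.
Qed.
End Comb.
Local Open Scope classical_set_scope.
Local Open Scope ring_scope.
Section Dot.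
Variable R : realType.

Lemma dotvE d (u v : 'rV[R]_d) : dotv u v = \sum_k u 0 k * v 0 k.
Proof. by rewrite /dotv mxE; apply: eq_bigr => k _; rewrite mxE. Qed.

Lemma dotvC d (u v : 'rV[R]_d) : dotv u v = dotv v u.
Proof. by rewrite !dotvE; apply: eq_bigr => k _; rewrite mulrC. Qed.

Lemma dotvDl d (u v w : 'rV[R]_d) : dotv (u + v) w = dotv u w + dotv v w.
Proof. by rewrite /dotv mulmxDl mxE. Qed.

Lemma dotvNl d (u w : 'rV[R]_d) : dotv (- u) w = - dotv u w.
Proof. by rewrite /dotv mulNmx mxE. Qed.

Lemma dotvBl d (u v w : 'rV[R]_d) : dotv (u - v) w = dotv u w - dotv v w.
Proof. by rewrite dotvDl dotvNl. Qed.

Lemma dotvBr d (u v w : 'rV[R]_d) : dotv w (u - v) = dotv w u - dotv w v.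
Proof. by rewrite dotvC dotvBl !(dotvC w). Qed.

Lemma dotvZl d a (u w : 'rV[R]_d) : dotv (a *: u) w = a * dotv u w.
Proof. by rewrite /dotv -scalemxAl mxE. Qed.

Lemma dotvZr d a (u w : 'rV[R]_d) : dotv w (a *: u) = a * dotv w u.
Proof. by rewrite dotvC dotvZl dotvC. Qed.

Lemma dotv_ge0 d (u : 'rV[R]_d) : 0 <= dotv u u.
Proof. by rewrite dotvE; apply: sumr_ge0 => k _; rewrite -expr2 sqr_ge0. Qed.

Lemma dotv_eq0 d (u : 'rV[R]_d) : dotv u u = 0 -> u = 0.
Proof.
rewrite dotvE => H; apply/rowP => k; rewrite mxE.
have P0 : forall i : 'I_d, true -> 0 <= u 0 i * u 0 i.
  by move=> i _; rewrite -expr2 sqr_ge0.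
have Hk : u 0 k * u 0 k = 0 := psumr_eq0P P0 H isT.
by move/eqP: Hk; rewrite mulf_eq0 orbb => /eqP.
Qed.

Lemma dotv_mulmx d m (u v : 'rV[R]_d) (M : 'M[R]_(d, m)) :
  dotv (u *m M) (v *m M) = ((u *m (M *m M^T)) *m v^T) 0 0.
Proof. by rewrite /dotv trmx_mul !mulmxA. Qed.

Lemma dotv_iso d m (u v : 'rV[R]_d) (M : 'M[R]_(d, m)) :
  M *m M^T = 1%:M -> dotv (u *m M) (v *m M) = dotv u v.
Proof. by move=> H; rewrite dotv_mulmx H mulmx1. Qed.

Lemma dotv_last d (x : 'rV[R]_d.+1) :
  dotv x (delta_mx 0 ord_max) = x 0 ord_max.
Proof. by rewrite /dotv trmx_delta -colE mxE. Qed.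

Lemma dotv_unit_ge d (x y : 'rV[R]_d) : dotv x x = 1 -> dotv y y = 1 -> -1 <= dotv x y.
Proof.
move=> hx hy; have := dotv_ge0 (x + y).
rewrite !dotvDl !(dotvC _ (x + y)) !dotvDl hx hy (dotvC y x).
by move=> h; lra.
Qed.

Lemma dotv_unit_eq d (x y : 'rV[R]_d) : dotv x x = 1 -> dotv y y = 1 -> dotv x y = 1 -> x = y.
Proof.
move=> hx hy hxy; apply/eqP; rewrite -subr_eq0; apply/eqP/dotv_eq0.
rewrite !dotvBl !dotvBr hx hy hxy (dotvC y x) hxy; lra.
Qed.

End Dot.
Section Reduce.
Variables (R : realType) (T : finType).

Definition same_gram d1 d2 (p : T -> 'rV[R]_d1) (q : T -> 'rV[R]_d2) :=
  forall i j, dotv (q i) (q j) = dotv (p i) (p j).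

Lemma dotv_row_mx d (x y : 'rV[R]_d) :
  dotv (row_mx (0 : 'rV[R]_1) x) (row_mx (0 : 'rV[R]_1) y) = dotv x y.
Proof. by rewrite /dotv tr_row_mx mul_row_col mul0mx add0r. Qed.

Lemma pad1 d (p : T -> 'rV[R]_d) : exists q : T -> 'rV[R]_d.+1, same_gram p q.
Proof.
exists (fun i => row_mx (0 : 'rV[R]_1) (p i)) => i j.
exact: dotv_row_mx.
Qed.

Lemma up n : forall d, (d <= n)%N -> forall p : T -> 'rV[R]_d,
  exists q : T -> 'rV[R]_n, same_gram p q.
Proof.
elim: n => [|n IH] d le p.
  have d0 : d = 0%N by lia.
  by subst d; exists p.
case: (ltngtP d n.+1) le => // [lt _|eq _].
  have [q1 h1] := IH d lt p; have [q2 h2] := pad1 q1.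
  by exists q2 => i j; rewrite h2 h1.
by subst d; exists p.
Qed.

Lemma orth_exists d (p : T -> 'rV[R]_d) : (#|T| < d)%N ->
  exists2 u : 'rV[R]_d, u != 0 & forall i, dotv u (p i) = 0.
Proof.
move=> lt.
pose P := \matrix_(k < #|T|, l < d) p (enum_val k) 0 l.
pose K := kermx P^T.
have rK : (0 < \rank K)%N by rewrite mxrank_ker; have := rank_leq_col P^T; lia.
have : K != 0 by rewrite -mxrank_eq0 -lt0n.
case: (pickP (fun k => row k K != 0)) => [k nz _|all0]; last first.
  case/negP; apply/eqP/row_matrixP => k; rewrite row0.
  by have /negbFE/eqP := all0 k.
exists (row k K) => // i.
have Hu : row k K *m P^T = 0 by rewrite -row_mul mulmx_ker row0.
have E : (row k K *m P^T) 0 (enum_rank i) = 0 by rewrite Hu mxE.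
rewrite mxE in E; rewrite dotvE -[RHS]E. apply: eq_bigr => l _.
by rewrite !mxE enum_rankK.
Qed.

Lemma entry_BZ d (x w : 'rV[R]_d) a k : (x - a *: w) 0 k = x 0 k - a * w 0 k.
Proof. by rewrite !mxE. Qed.

Lemma entry_B d (x w : 'rV[R]_d) k : (x - w) 0 k = x 0 k - w 0 k.
Proof. by rewrite !mxE. Qed.

Lemma refl_iso d (w x y : 'rV[R]_d) :
  dotv (x - (2 / dotv w w * dotv x w) *: w) (y - (2 / dotv w w * dotv y w) *: w)
  = dotv x y.
Proof.
rewrite !dotvBl !dotvBr !dotvZl !dotvZr (dotvC w y).
have [s0|s0] := eqVneq (dotv w w) 0.
  by rewrite s0 invr0 !mulr0 !mul0r !subr0.
field; exact: s0.
Qed.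

Lemma down1 d (p : T -> 'rV[R]_d.+1) : (#|T| < d.+1)%N ->
  exists q : T -> 'rV[R]_d, same_gram p q.
Proof.
move=> lt; have [u nz0 hu] := orth_exists p lt.
pose a := dotv u u.
have a0 : 0 < a.
  rewrite lt_def dotv_ge0 andbT; apply/eqP => /dotv_eq0 u0.
  by rewrite u0 eqxx in nz0.
pose uh := (Num.sqrt a)^-1 *: u.
have sa0 : Num.sqrt a != 0 by rewrite sqrtr_eq0 -ltNge.
have uh1 : dotv uh uh = 1.
  rewrite dotvZl dotvZr -/a mulrA -expr2 exprVn sqr_sqrtr ?(ltW a0) //.
  by rewrite mulVf // gt_eqF.
have huh i : dotv (p i) uh = 0 by rewrite dotvZr dotvC hu mulr0.
pose ee : 'rV[R]_d.+1 := delta_mx 0 ord_max.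
pose w := uh - ee.
pose s := dotv w w.
pose c := 2 / s.
pose refl (x : 'rV[R]_d.+1) := x - (c * dotv x w) *: w.
have iso x y : dotv (refl x) (refl y) = dotv x y.
  exact: refl_iso.
have ee1 : ee 0 ord_max = 1 by rewrite mxE !eqxx.
have hs : s = 2 - 2 * uh 0 ord_max.
  rewrite /s /w !dotvBl !dotvBr uh1 !dotv_last ee1 (dotvC ee uh) dotv_last; ring.
have last0 i : (refl (p i)) 0 ord_max = 0.
  have xw : dotv (p i) w = - p i 0 ord_max by rewrite /w dotvBr huh dotv_last sub0r.
  have [s0|s0] := eqVneq s 0.
    have w0 : w = 0 by exact: dotv_eq0.
    have : dotv (p i) w = 0 by rewrite w0 /dotv trmx0 mulmx0 mxE.
    by rewrite xw /refl w0 scaler0 subr0 => /eqP; rewrite oppr_eq0 => /eqP.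
  have wm : w 0 ord_max = uh 0 ord_max - 1.
    by rewrite /w entry_B ee1.
  rewrite /refl entry_BZ xw /c.
  rewrite wm; rewrite hs in s0 *.
  field; move: s0; apply: contra => /eqP h; apply/eqP; lra.
exists (fun i => \row_(k < d) (refl (p i)) 0 (widen_ord (leqnSn d) k)) => i j.
rewrite -iso (dotvE (refl (p i))) big_ord_recr /= last0 mul0r addr0 dotvE.
by apply: eq_bigr => k _; rewrite !mxE.
Qed.

Lemma down n : (#|T| <= n)%N -> forall d (p : T -> 'rV[R]_d), (n <= d)%N ->
  exists q : T -> 'rV[R]_n, same_gram p q.
Proof.
move=> hn d; elim: d => [|d IH] p le.
  have n0 : n = 0%N by lia.
  by subst n; exists p.
case: (ltngtP n d.+1) le => // [lt _|eq _].
  have [q1 h1] := down1 p (leq_ltn_trans hn lt).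
  have [q2 h2] := IH q1 lt.
  by exists q2 => i j; rewrite h2 h1.
by subst n; exists p.
Qed.

Lemma reduce d (p : T -> 'rV[R]_d) : exists q : T -> 'rV[R]_#|T|, same_gram p q.
Proof.
case: (leqP d #|T|) => h; first exact: up.
exact: down (leqnn _) _ _ (ltnW h).
Qed.

End Reduce.
Section Alg.
Variable R : realType.

Lemma alg_t2 (s : R) : -1 <= s -> s < 0 -> 2 <= 1 - s^-1.
Proof.
move=> h1 h2; have sn : s != 0 by rewrite lt_eqF.
have hv : s * s^-1 = 1 by rewrite mulfV.
have : s^-1 < 0 by rewrite invr_lt0.
nra.
Qed.

Lemma alg_inv (s : R) : s < 0 -> - ((1 - s^-1) - 1)^-1 = s.
Proof. by move=> _; rewrite addrC addKr invrN invrK opprK. Qed.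

Lemma alg_opt (s t : R) : 2 <= t -> s < 0 -> s <= - (t - 1)^-1 -> 1 - s^-1 <= t.
Proof.
move=> h2 hs hle.
have sn : s != 0 by rewrite lt_eqF.
have hv : s * s^-1 = 1 by rewrite mulfV.
have tn : t - 1 != 0 by apply/eqP => h; lra.
have hw : (t - 1) * (t - 1)^-1 = 1 by rewrite mulfV.
have : 0 < (t - 1)^-1 by rewrite invr_gt0; lra.
have : s^-1 < 0 by rewrite invr_lt0.
nra.
Qed.

Lemma alg_lb (t : R) : 2 <= t -> -1 <= - (t - 1)^-1.
Proof.
move=> h2; have tn : t - 1 != 0 by apply/eqP => h; lra.
have hw : (t - 1) * (t - 1)^-1 = 1 by rewrite mulfV.
have : 0 < (t - 1)^-1 by rewrite invr_gt0; lra.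
nra.
Qed.

Lemma alg_neg (t : R) : 2 <= t -> - (t - 1)^-1 < 0.
Proof. by move=> h2; rewrite oppr_lt0 invr_gt0; lra. Qed.

End Alg.

Section Exist.
Variables (R : realType) (T : finType) (e : rel T).
Hypothesis e_irr : irreflexive e.
Local Notation N := #|T|.
Local Notation X := 'rV[R]_(N * N).

Definition conf (v : X) (i : T) : 'rV[R]_N :=
  \row_l v 0 (mxvec_index (enum_rank i) l).
Definition enc (q : T -> 'rV[R]_N) : X :=
  mxvec (\matrix_(k, l) q (enum_val k) 0 l).

Lemma conf_enc q i : conf (enc q) i = q i.
Proof. by apply/rowP => l; rewrite !mxE mxvecE mxE enum_rankK. Qed.

Lemma cont_sum (n : nat) (F : 'I_n -> X -> R) :
  (forall l, continuous (F l)) -> continuous (fun v => \sum_(l < n) F l v).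
Proof.
elim: n F => [|n IH] F HF.
  rewrite (_ : (fun v => _) = fun=> 0); first exact: cst_continuous.
  by apply: funext => v; rewrite big_ord0.
rewrite (_ : (fun v => _) = fun v => \sum_(l < n) F (widen_ord (leqnSn n) l) v
   + F ord_max v); last by apply: funext => v; rewrite big_ord_recr.
by move=> x; apply: (continuousD (IH _ (fun l => HF _) x) (HF _ x)).
Qed.

Lemma cont_dot i j : continuous (fun v : X => dotv (conf v i) (conf v j)).
Proof.
rewrite (_ : (fun v : X => dotv (conf v i) (conf v j)) = fun v => \sum_l v 0 (mxvec_index (enum_rank i) l)
   * v 0 (mxvec_index (enum_rank j) l)); last first.
  by apply: funext => v; rewrite dotvE; apply: eq_bigr => l _; rewrite !mxE.
apply: cont_sum => l x.
apply: (@continuousM _ _ (fun v : X => v 0 (mxvec_index (enum_rank i) l))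
  (fun v : X => v 0 (mxvec_index (enum_rank j) l)) x); exact: coord_continuous.
Qed.

Lemma cont_bigmax (I : eqType) (r : seq I) (P : pred I) (F : I -> X -> R) :
  (forall i, continuous (F i)) ->
  continuous (fun v => \big[Order.max/-1]_(i <- r | P i) F i v).
Proof.
move=> HF; elim: r => [|a r IH].
  rewrite (_ : (fun v => _) = fun=> -1); first exact: cst_continuous.
  by apply: funext => v; rewrite big_nil.
case Pa: (P a).
  rewrite (_ : (fun v => _) = fun v => Order.max (F a v)
     (\big[Order.max/-1]_(i <- r | P i) F i v)); last first.
    by apply: funext => v; rewrite big_cons Pa.
  by move=> x; apply: (@continuous_max _ _ (F a) _ x (HF a x) (IH x)).
rewrite (_ : (fun v => _) = fun v => \big[Order.max/-1]_(i <- r | P i) F i v) //.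
by apply: funext => v; rewrite big_cons Pa.
Qed.

Definition U : set X := [set v | forall i, dotv (conf v i) (conf v i) = 1].

Lemma closed_eqf (f g : X -> R) : continuous f -> continuous g ->
  closed [set v | f v = g v].
Proof.
move=> cf cg.
have -> : [set v | f v = g v] = (fun v => f v - g v) @^-1` [set x | x = 0].
  by apply/seteqP; split => v /=; [move=> ->; rewrite subrr|move/eqP; rewrite subr_eq0 => /eqP].
apply: (continuous_closedP _).1; last exact: closed_eq.
by move=> x; apply: (continuousB (cf x) (cg x)).
Qed.

Lemma closed_U : closed U.
Proof.
have -> : U = \bigcap_(i in [set: T]) [set v | dotv (conf v i) (conf v i) = 1].
  apply/seteqP; split => v /=; first by move=> H i _; exact: H.
  by move=> H i; exact: H i I.
apply: closed_bigI => i _.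
by apply: closed_eqf; [exact: cont_dot|exact: cst_continuous].
Qed.

Lemma coord_bound d (x : 'rV[R]_d) l : dotv x x = 1 -> x 0 l ^+ 2 <= 1.
Proof.
rewrite dotvE (bigD1 l) //= => H; rewrite -H expr2 lerDl.
by apply: sumr_ge0 => k _; rewrite -expr2 sqr_ge0.
Qed.

Lemma compact_U : compact U.
Proof.
apply: (subclosed_compact closed_U
  (rV_compact (fun (_ : 'I_(N * N)) => @segment_compact R (-1) 1))).
move=> v Uv k /=; case/mxvec_indexP: k => a l.
have E : v 0 (mxvec_index a l) = (conf v (enum_val a)) 0 l by rewrite mxE enum_valK.
have := coord_bound l (Uv (enum_val a)); rewrite -E => h.
by rewrite in_itv /=; apply/andP; split; nra.
Qed.

Definition g (v : X) := \big[Order.max/-1]_(x : T * T | e x.1 x.2) dotv (conf v x.1) (conf v x.2).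

Lemma cont_g : continuous g.
Proof. by apply: cont_bigmax => x; apply: cont_dot. Qed.

Lemma sum_delta n (a : 'I_n) (F : 'I_n -> R) : \sum_l ((a == l)%:R * F l) = F a.
Proof.
rewrite (bigD1 a) //= eqxx mul1r big1 ?addr0 // => l /negbTE.
by rewrite eq_sym => ->; rewrite mul0r.
Qed.

Lemma simplex : (1 < N)%N -> exists q : T -> 'rV[R]_N,
  forall i j, dotv (q i) (q j) = if i == j then 1 else - (N%:R - 1)^-1.
Proof.
move=> N2.
pose n : R := N%:R^-1.
have Nr : 1 < (N%:R : R) by rewrite ltr1n.
pose c := Num.sqrt (N%:R / (N%:R - 1) : R).
pose q i : 'rV[R]_N := c *: \row_l ((enum_rank i == l)%:R - n).
have N0 : (N%:R : R) != 0 by apply/eqP => h; lra.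
have N1 : (N%:R : R) - 1 != 0 by apply/eqP => h; lra.
have c2 : c * c = N%:R / (N%:R - 1).
  by rewrite -expr2 sqr_sqrtr // divr_ge0 //; lra.
have key (a b : 'I_N) : \sum_l ((a == l)%:R - n) * ((b == l)%:R - n) = (a == b)%:R - n.
  have E l : ((a == l)%:R - n) * ((b == l)%:R - n) =
     (a == l)%:R * ((b == l)%:R - n) - n * ((b == l)%:R - n) by ring.
  rewrite (eq_bigr _ (fun l _ => E l)) sumrB sum_delta -mulr_sumr sumrB.
  have -> : \sum_l (b == l)%:R = 1 :> R.
    by rewrite -[RHS](sum_delta b (fun _ => 1)); apply: eq_bigr => l _; rewrite mulr1.
  by rewrite sumr_const card_ord eq_sym -(mulr_natr n) /n mulVf // subrr mulr0 subr0.
exists q => i j.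
rewrite /q dotvZl dotvZr dotvE.
rewrite (eq_bigr (fun l => ((enum_rank i == l)%:R - n) * ((enum_rank j == l)%:R - n)));
  last by move=> l _; rewrite !mxE.
rewrite key (inj_eq (@enum_rank_inj _)) mulrA c2 /n.
by case: eqP => _ /=; rewrite ?mulr1n ?mulr0n; field; apply/andP; split.
Qed.

End Exist.
Section Opt.
Variables (R : realType) (T : finType) (e : rel T).
Hypothesis e_irr : irreflexive e.
Local Notation N := #|T|.
Local Notation X := 'rV[R]_(N * N).

Lemma two_le_N a b : e a b -> (1 < N)%N.
Proof.
move=> eab; apply/card_gt1P; exists a, b; split => //.
by apply/eqP => ab; subst; rewrite e_irr in eab.
Qed.

Lemma simplex_col a b : e a b -> exists q : T -> 'rV[R]_N, strict_vector_coloring e (N%:R) q.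
Proof.
move=> eab; have N2 := two_le_N eab; have [q hq] := simplex R N2.
exists q; split; first by rewrite (ler_nat R 2 N).
split; first by move=> i; rewrite hq eqxx.
move=> i j eij; rewrite hq; case: eqP => // ij; subst.
by rewrite e_irr in eij.
Qed.

Lemma g_bound t' : admits_vc e t' -> exists2 v : X, U v & g e v <= - (t' - 1)^-1.
Proof.
case=> d [p [h2 [hu he]]]; have [q hq] := reduce p.
exists (enc q); first by move=> i; rewrite conf_enc hq hu.
apply: bigmax_le; first exact: alg_lb.
by case=> i j /= eij; rewrite !conf_enc hq; apply: he.
Qed.

Lemma opt_vc_exists a b : e a b -> exists d (p : T -> 'rV[R]_d), optimal_vc e p.
Proof.
move=> eab.
have [q0 [h20 [hu0 he0]]] := simplex_col eab.
have vc0 : admits_vc e (N%:R : R).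
  by exists N, q0; split=> //; split=> // i j eij; rewrite he0.
have U0 : (@U R T) !=set0 by have [v Uv _] := g_bound vc0; exists v.
have [v vU vmin] := compact_EVT_min U0 (@compact_U R T)
   (continuous_subspaceT (@cont_g R T e)).
have Uv : U v := set_mem vU.
pose s := g e v.
have hs t' : admits_vc e t' -> s <= - (t' - 1)^-1.
  move=> ht; have [w Uw gw] := g_bound ht.
  exact: le_trans (vmin w (mem_set Uw)) gw.
have s1 : -1 <= s.
  have : dotv (conf v a) (conf v b) <= s.
    by rewrite /s /g; exact: (@le_bigmax_cond _ _ _ (-1) (a, b)
      (fun x : T * T => e x.1 x.2) (fun x : T * T => dotv (conf v x.1) (conf v x.2)) eab).
  exact/le_trans/dotv_unit_ge.
have s0 : s < 0 := le_lt_trans (hs _ vc0) (alg_neg h20).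
exists N, (conf v), (1 - s^-1); split; last first.
  by move=> t' ht'; have [d [p [h2 _]]] := ht'; exact: alg_opt h2 s0 (hs _ ht').
split; first exact: alg_t2.
split; first exact: Uv.
move=> i j eij; rewrite alg_inv //; rewrite /s /g.
exact: (@le_bigmax_cond _ _ _ (-1) (i, j)
      (fun x : T * T => e x.1 x.2) (fun x : T * T => dotv (conf v x.1) (conf v x.2)) eij).
Qed.

Definition Sset (a b : T) : set X := [set v | @U R T v /\ forall x : T * T, e x.1 x.2 ->
  dotv (conf v x.1) (conf v x.2) = dotv (conf v a) (conf v b)].

Lemma compact_S a b : compact (Sset a b).
Proof.
apply: (subclosed_compact _ (@compact_U R T)); last by move=> v [].
have -> : Sset a b = @U R T `&` \bigcap_(x in [set x : T * T | e x.1 x.2])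
   [set v | dotv (conf v x.1) (conf v x.2) = dotv (conf v a) (conf v b)].
  apply/seteqP; split => v /= [H1 H2]; split => // x ex; exact: H2.
apply: closedI; first exact: closed_U.
by apply: closed_bigI => x _; apply: closed_eqf; exact: cont_dot.
Qed.

Lemma h_bound a b t' : e a b -> admits_svc e t' ->
  exists2 v : X, Sset a b v & dotv (conf v a) (conf v b) = - (t' - 1)^-1.
Proof.
move=> eab [d [p [h2 [hu he]]]]; have [q hq] := reduce p.
exists (enc q); last by rewrite !conf_enc hq he.
split; first by move=> i; rewrite conf_enc hq hu.
by move=> x ex; rewrite !conf_enc !hq !he.
Qed.

Lemma opt_svc_exists a b : e a b -> exists d (p : T -> 'rV[R]_d), optimal_svc e p.
Proof.
move=> eab.
have [q0 sc0] := simplex_col eab.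
have h20 : 2 <= (N%:R : R) by case: sc0.
have vc0 : admits_svc e (N%:R : R) by exists N, q0.
have S0 : Sset a b !=set0 by have [v Sv _] := h_bound eab vc0; exists v.
have [v vS vmin] := compact_EVT_min S0 (@compact_S a b)
   (continuous_subspaceT (@cont_dot R T a b)).
have [Uv Ev] : Sset a b v := set_mem vS.
pose s := dotv (conf v a) (conf v b).
have hs t' : admits_svc e t' -> s <= - (t' - 1)^-1.
  move=> ht; have [w Sw fw] := h_bound eab ht; rewrite -fw.
  exact: (vmin w (mem_set Sw)).
have s1 : -1 <= s by exact: dotv_unit_ge.
have s0 : s < 0 := le_lt_trans (hs _ vc0) (alg_neg h20).
exists N, (conf v), (1 - s^-1); split; last first.
  by move=> t' ht'; have [d [p [h2 _]]] := ht'; exact: alg_opt h2 s0 (hs _ ht').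
split; first exact: alg_t2.
split; first exact: Uv.
by move=> i j eij; rewrite alg_inv // (Ev (i, j) eij).
Qed.

Lemma comp_opt_vc d (p : T -> 'rV[R]_d) f : graph_hom e f -> optimal_vc e p ->
  optimal_vc e (p \o f).
Proof.
move=> hf [t [[h2 [hu he]] ho]]; exists t; split; last exact: ho.
split=> //; split; first by move=> i; exact: hu.
by move=> i j eij; exact: he _ _ (hf _ _ eij).
Qed.

Lemma comp_opt_svc d (p : T -> 'rV[R]_d) f : graph_hom e f -> optimal_svc e p ->
  optimal_svc e (p \o f).
Proof.
move=> hf [t [[h2 [hu he]] ho]]; exists t; split; last exact: ho.
split=> //; split; first by move=> i; exact: hu.
by move=> i j eij; exact: he _ _ (hf _ _ eij).
Qed.

End Opt.

Theorem theorem4p3 (R : realType) (T : finType) (e : rel T)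
    (e_sym : symmetric e) (e_irr : irreflexive e)
    (e_conn : connected_graph e) :
  ((forall d (p : T -> 'rV[R]_d), optimal_vc e p -> locally_injective e p) ->
     is_core e) /\
  ((forall d (p : T -> 'rV[R]_d), optimal_svc e p -> locally_injective e p) ->
     is_core e) /\
  (uniquely_vc R e ->
     (exists d (p : T -> 'rV[R]_d), optimal_vc e p /\ locally_injective e p) ->
     is_core e).
Proof.
have noedge_li f : (forall x : T * T, ~~ e x.1 x.2) -> loc_inj e f.
  by move=> ne i j k eik; have := ne (i, k); rewrite /= eik.
have li_of d (p : T -> 'rV[R]_d) f : locally_injective e (p \o f) -> loc_inj e f.
  move=> li i j k eik ejk nij; apply/eqP => fij.
  by have := li i j k eik ejk nij; rewrite /= fij eqxx.
split.
  move=> H f hf; apply: comb_main => //.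
  case: (pickP (fun x : T * T => e x.1 x.2)) => [[a b] /= eab|ne]; last first.
    by apply: noedge_li => x; rewrite ne.
  have [d [p op]] := opt_vc_exists R e_irr eab.
  exact: li_of (H _ _ (comp_opt_vc hf op)).
split.
  move=> H f hf; apply: comb_main => //.
  case: (pickP (fun x : T * T => e x.1 x.2)) => [[a b] /= eab|ne]; last first.
    by apply: noedge_li => x; rewrite ne.
  have [d [p op]] := opt_svc_exists R e_irr eab.
  exact: li_of (H _ _ (comp_opt_svc hf op)).
move=> Hu [d [p [op li]]] f hf; apply: comb_main => // i j k eik ejk nij.
apply/eqP => fij.
have G := Hu _ _ _ _ op (comp_opt_vc hf op) i j.
have [t [[_ [hu _]] _]] := op.
rewrite /= fij hu in G.
have := li i j k eik ejk nij.
by rewrite (dotv_unit_eq (hu i) (hu j) G) eqxx.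
Qed.
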